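(* Let $\mathrm{2RR}=\textsc{RoundRobin}(\mathrm{ALG}_{\mathrm{fail}},\mathrm{ALG}_{\mathrm{succ}};1,1)$ be run on an SSC instance $I$. Then for every realization $x$ and every $h\in\{\mathrm{fail},\mathrm{succ}\}$, $$\sum_{\tau=1}^{\tau_1}\mathrm{cost}^{\mathrm{2RR}}_\tau(\mathrm{ALG}_h,I)\le 2\,\mathrm{cost}(\mathrm{OPT},I).$$
   Context: An instance $I$ of Stochastic Score Classification (SSC) consists of tests $N=\{1,\dots,n\}$, costs $c_j\ge 0$, success probabilities $p_j\in(0,1)$, and integers $0=t_1<t_2<\dots<t_B<t_{B+1}=n+1$. The outcome vector $x\in\{0,1\}^N$ has independent coordinates with $\Pr[x_j=1]=p_j$ (test $j$ succeeds iff $x_j=1$, otherwise it fails). The score $f(x)$ is the unique $i\in\{1,\dots,B\}$ with $t_i\le\|x\|_1\le t_{i+1}-1$. A (possibly adaptive) strategy conducts tests one at a time, each at most once, the choice of the next test possibly depending on outcomes observed so far, and stops as soon as $f(x)$ is determined (i.e., all $x'\in\{0,1\}^N$ agreeing with $x$ on the conducted tests have $f(x')=f(x)$). $\mathrm{cost}(S,I)$ is the random total cost of the tests conducted by strategy $S$ on $I$. $\mathrm{OPT}$ is a fixed strategy minimizing $\mathbb{E}[\mathrm{cost}(S,I)]$ over all adaptive strategies $S$. Let $\sigma_{\mathrm{fail}},\sigma_{\mathrm{succ}}$ be permutations of $N$ (ties broken arbitrarily) such that $c_{\sigma_{\mathrm{fail}}(1)}/(1-p_{\sigma_{\mathrm{fail}}(1)})\le\dots\le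 c_{\sigma_{\mathrm{fail}}(n)}/(1-p_{\sigma_{\mathrm{fail}}(n)})$ and $c_{\sigma_{\mathrm{succ}}(1)}/p_{\sigma_{\mathrm{succ}}(1)}\le\dots\le c_{\sigma_{\mathrm{succ}}(n)}/p_{\sigma_{\mathrm{succ}}(n)}$; $\mathrm{ALG}_{\mathrm{fail}},\mathrm{ALG}_{\mathrm{succ}}$ denote these orders of tests. $\textsc{RoundRobin}(\mathrm{ALG}_1,\dots,\mathrm{ALG}_k;\alpha_1,\dots,\alpha_k)$, for fixed orders $\mathrm{ALG}_h$ of $N$ and weights $\alpha_h>0$: initialize $C_h=0$ for all $h$; while $f(x)$ is not determined, for each $h$ let $\delta_h$ be the cost of the first test in the order $\mathrm{ALG}_h$ that has not yet been conducted by the scheme, choose $h^\star\in\arg\min_h (C_h+\delta_h)/\alpha_h$ (ties arbitrary), conduct that test of $\mathrm{ALG}_{h^\star}$, and set $C_{h^\star}\leftarrow C_{h^\star}+\delta_{h^\star}$. Each loop iteration is a step; $\mathrm{cost}^{\mathrm{2RR}}_\tau(\mathrm{ALG}_h,I)$ equals the cost of the test conducted in step $\tau$ if $h=h^\star$ in that step, and $0$ otherwise. For a realization $x$ with $i=f(x)$, $\tau_1$ is the smallest integer $\tau\ge 0$ such that among the tests conducted by $\mathrm{2RR}$ in steps $1,\dots,\tau$ at least $t_i$ succeeded or at least $n+1-t_{i+1}$ failed. *)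

(* Defs.v *)
From mathcomp Require Import all_boot all_order all_algebra.
Set Implicit Arguments. Unset Strict Implicit. Unset Printing Implicit Defensive.
Import Order.TTheory GRing.Theory Num.Theory.
Local Open Scope ring_scope.

Section SSC.
Variable R : realFieldType.
Variable n : nat.
Variable c : 'I_n -> R.
Variable p : 'I_n -> R.
(* thresholds t_1 < ... < t_{B+1}, with t_1 = 0 and t_{B+1} = n+1 *)
Variable B : nat.
Variable t : nat -> nat.

(* outcome vectors x in {0,1}^N ; true = success *)
Definition outcome := {ffun 'I_n -> bool}.

Definition weight (x : outcome) : nat := (\sum_(j < n) (x j : nat))%N.

(* f(x): the (unique, under the threshold hypotheses) i in {1..B}
   with t_i <= |x|_1 <= t_{i+1} - 1 *)
Definition score (x : outcome) : nat :=
  (\max_(1 <= i < B.+1 | t i <= weight x) i)%N.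

Definition determined (x : outcome) (T : seq 'I_n) : bool :=
  [forall x' : outcome,
     [forall j : 'I_n, (j \in T) ==> (x' j == x j)] ==> (score x' == score x)].

Definition prob (x : outcome) : R :=
  \prod_(j < n) (if x j then p j else 1 - p j).

Definition strategy := seq ('I_n * bool) -> 'I_n.

Fixpoint shist (S : strategy) (x : outcome) (k : nat) : seq ('I_n * bool) :=
  match k with
  | 0 => [::]
  | k'.+1 =>
      let h := shist S x k' in
      if determined x (map fst h) then h else rcons h (S h, x (S h))
  end.

Definition valid_strategy (S : strategy) : Prop :=
  forall (x : outcome) (k : nat),
    ~~ determined x (map fst (shist S x k)) ->
    S (shist S x k) \notin map fst (shist S x k).

(* cost(S, I) on realization x (at most n tests are ever conducted) *)
Definition scost (S : strategy) (x : outcome) : R :=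
  \sum_(e <- shist S x n) c e.1.

Definition Ecost (S : strategy) : R := \sum_(x : outcome) prob x * scost S x.

(* A step is recorded as (h, j): h = false for ALG_fail, h = true for
   ALG_succ, and j the test conducted in that step. *)
Variables (sfail ssucc : seq 'I_n).
Variable tie : nat -> bool.
Variable x : outcome.

Definition first_untested (s : seq 'I_n) (done : seq 'I_n) : option 'I_n :=
  ohead [seq j <- s | j \notin done].

Definition Cacc (h : bool) (tr : seq (bool * 'I_n)) : R :=
  \sum_(e <- tr | e.1 == h) c e.2.

Definition rr_step (tau : nat) (tr : seq (bool * 'I_n)) : option (bool * 'I_n) :=
  let done := map snd tr in
  match first_untested sfail done, first_untested ssucc done with
  | Some jf, Some js =>
      let vf := Cacc false tr + c jf in
      let vs := Cacc true tr + c js in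
      let h := if vf < vs then false else if vs < vf then true else tie tau in
      Some (h, if h then js else jf)
  | _, _ => None
  end.

Fixpoint rr_trace (k : nat) : seq (bool * 'I_n) :=
  match k with
  | 0 => [::]
  | k'.+1 =>
      let tr := rr_trace k' in
      if determined x (map snd tr) then tr
      else match rr_step (size tr).+1 tr with
           | Some e => rcons tr e
           | None => tr
           end
  end.

(* full run of 2RR on x (each step conducts a new test, so n steps suffice) *)
Definition rr_run : seq (bool * 'I_n) := rr_trace n.

Definition rr_cost (h : bool) (tau : nat) : R :=
  match onth rr_run tau.-1 with
  | Some e => if (tau > 0)%N && (e.1 == h) then c e.2 else 0
  | None => 0
  end.

Definition tau1_cond (tau : nat) : bool :=
  let T := map snd (take tau rr_run) in
  let i := score x in
  (count (fun j => x j) T >= t i)%N || (count (fun j => ~~ x j) T >= n.+1 - t i.+1)%N.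

Definition tau1 : nat := find tau1_cond (iota 0 (size rr_run).+1).

End SSC.

(* Main.v *)
Require Import Defs.
From mathcomp Require Import all_boot all_order all_algebra.
From mathcomp Require Import ring lra zify.
Set Implicit Arguments. Unset Strict Implicit. Unset Printing Implicit Defensive.
Import Order.TTheory GRing.Theory Num.Theory.
Local Open Scope ring_scope.

Lemma count_ineq (R : realFieldType) (n : nat) (c : 'I_n -> R) (A D T : {set 'I_n})
  (q d : R) (hc : forall j, 0 <= c j) (hq : 0 <= q) (hAD : A \subset D)
  (hA : forall j, j \in A -> c j <= q) (hd : d <= q)
  (hout : forall w, w \notin D -> q <= 2 * c w) (hcard : (#|D| < #|T|)%N) :
  \sum_(j in A) c j + d <= 2 * \sum_(j in T) c j.
Proof.
pose f j := if j \in T then c j else q.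
have h1 : \sum_(j in A) c j <= \sum_(j in D) f j.
  apply: (@le_trans _ _ (\sum_(j in A) f j)).
    apply: ler_sum => j jA; rewrite /f; case: ifP => // _; exact: hA.
  rewrite [X in _ <= X](big_setID A) /= (setIidPr hAD) lerDl.
  apply: sumr_ge0 => j _; rewrite /f; case: ifP => //.
have h2 : \sum_(j in D) f j = \sum_(j in D :&: T) c j + q *+ #|D :\: T|.
  rewrite (big_setID T) /=; congr (_ + _).
    by apply: eq_bigr => j; rewrite inE /f => /andP[_ ->].
  by rewrite -sumr_const; apply: eq_bigr => j; rewrite !inE /f => /andP[/negbTE ->].
have h3 : \sum_(j in T) c j = \sum_(j in D :&: T) c j + \sum_(j in T :\: D) c j.
  by rewrite (big_setID D) /= setIC.
have h4 : q *+ #|T :\: D| <= 2 * \sum_(j in T :\: D) c j.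
  rewrite -sumr_const mulr_sumr; apply: ler_sum => j; rewrite !inE => /andP[jD _].
  exact: hout.
have hcnt : (#|D :\: T|.+1 <= #|T :\: D|)%N.
  have := cardsID T D; have := cardsID D T; rewrite setIC => e1 e2. lia.
have h5 : q *+ #|D :\: T| + q <= q *+ #|T :\: D|.
  rewrite -mulrSr; exact: (ler_wpMn2l hq hcnt).
have h6 : 0 <= \sum_(j in D :&: T) c j by apply: sumr_ge0.
rewrite h2 in h1; rewrite h3.
move: h1 h4 h5 h6 hd; generalize (\sum_(j in A) c j) (\sum_(j in D :&: T) c j) (\sum_(j in T :\: D) c j) (q *+ #|D :\: T|) (q *+ #|T :\: D|).
move=> sA a b k1 k2 *; lra.
Qed.

Lemma le_div1 (R : realFieldType) (cc aa : R) : 0 <= cc -> 0 < aa -> aa <= 1 -> cc <= cc / aa.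
Proof. by move=> hc ha ha1; rewrite ler_pdivlMr // ler_piMr. Qed.

Lemma core (R : realFieldType) (n : nat) (c a b : 'I_n -> R)
  (hc : forall j, 0 <= c j) (ha : forall w, 0 < a w) (hb : forall w, 0 < b w)
  (hab : forall w, a w + b w = 1)
  (A D T : {set 'I_n}) (jA jB : 'I_n)
  (hheadA : forall w, w \notin D -> c jA / a jA <= c w / a w)
  (hheadB : forall w, w \notin D -> c jB / b jB <= c w / b w)
  (hcmp : c jA / a jA <= c jB / b jB)
  (hAD : A \subset D) (hAr : forall j, j \in A -> c j / a j <= c jA / a jA)
  (hcard : (#|D| < #|T|)%N) :
  \sum_(j in A) c j + c jA <= 2 * \sum_(j in T) c j.
Proof.
have a1 : forall w, a w <= 1.
  move=> w; have := hab w; have := hb w; lra.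
apply: (count_ineq (A := A) (D := D) (T := T) (q := c jA / a jA)) => //.
- by apply: divr_ge0 => //; apply: ltW.
- move=> j jA'; apply: le_trans (hAr _ jA'); exact: le_div1.
- exact: le_div1.
- move=> w wD.
  have e1 : c w = a w * (c w / a w) by rewrite mulrC mulfVK // gt_eqF.
  have e2 : c w = b w * (c w / b w) by rewrite mulrC mulfVK // gt_eqF.
  have i1 : a w * (c jA / a jA) <= a w * (c w / a w).
    apply: ler_wpM2l; first exact: ltW.
    exact: hheadA.
  have i2 : b w * (c jA / a jA) <= b w * (c w / b w).
    apply: ler_wpM2l; first exact: ltW.
    exact: le_trans hcmp (hheadB _ wD).
  have e3 : c jA / a jA = a w * (c jA / a jA) + b w * (c jA / a jA).
    by rewrite -mulrDl hab mul1r.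
  move: i1 i2 e3; rewrite -e1 -e2.
  move=> *; lra.
Qed.

Lemma head_min (n : nat) (T' : Type) (f : 'I_n -> T') (le : T' -> T' -> bool)
  (letr : forall a b d, le a b -> le b d -> le a d) (lerefl : forall a, le a a)
  (s done : seq 'I_n) (j : 'I_n)
  (hperm : perm_eq s (enum 'I_n)) (hs : sorted (fun a b => le (f a) (f b)) s)
  (hf : first_untested s done = Some j) :
  j \notin done /\ forall w, w \notin done -> le (f j) (f w).
Proof.
move: hf; rewrite /first_untested.
have hsort : sorted (fun a b => le (f a) (f b)) [seq j <- s | j \notin done].
  apply: sorted_filter => //; move=> a b d; exact: letr.
have hmem : forall w, w \notin done -> w \in [seq j <- s | j \notin done].
  by move=> w wd; rewrite mem_filter wd (perm_mem hperm) mem_enum.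
move: hsort hmem; case E: [seq j <- s | j \notin done] => [|j0 s'] //= hsort hmem [<-].
split.
  have : j0 \in [seq j <- s | j \notin done] by rewrite E mem_head.
  by rewrite mem_filter => /andP[].
move=> w wd; have := hmem w wd; rewrite inE => /orP[/eqP -> //|ws'].
have := order_path_min (leT := fun a b => le (f a) (f b)) _ hsort.
move=> /(_ (fun a b d => letr (f b) (f a) (f d))) /allP; apply => //.
Qed.

Definition ratio (R : realFieldType) (n : nat) (c p : 'I_n -> R) (hh : bool) (w : 'I_n) : R :=
  if hh then c w / p w else c w / (1 - p w).

Lemma rr_step_info (R : realFieldType) (n : nat) (c p : 'I_n -> R)
  (sfail ssucc : seq 'I_n)
  (hsf : perm_eq sfail (enum 'I_n))
  (hsfs : sorted (fun a b => c a / (1 - p a) <= c b / (1 - p b)) sfail)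
  (hss : perm_eq ssucc (enum 'I_n))
  (hsss : sorted (fun a b => c a / p a <= c b / p b) ssucc)
  (tie : nat -> bool) tau tr e :
  rr_step c sfail ssucc tie tau tr = Some e ->
  exists jf js, [/\ first_untested sfail (map snd tr) = Some jf,
     first_untested ssucc (map snd tr) = Some js,
     e.2 = (if e.1 then js else jf),
     Cacc c e.1 tr + c e.2 <= Cacc c false tr + c jf &
     Cacc c e.1 tr + c e.2 <= Cacc c true tr + c js].
Proof.
rewrite /rr_step.
case Ef: (first_untested sfail _) => [jf|] //; case Es: (first_untested ssucc _) => [js|] // [<-] /=.
exists jf, js; split => //.
- by case: ltgtP => h /=; try case: (tie tau); lra.
- by case: ltgtP => h /=; try case: (tie tau); lra.
Qed.

Definition Good (R : realFieldType) (n : nat) (c p : 'I_n -> R) (tr : seq (bool * 'I_n)) : Prop :=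
  uniq (map snd tr) /\
  forall e w, e \in tr -> w \notin map snd tr -> ratio c p e.1 e.2 <= ratio c p e.1 w.

Lemma heads (R : realFieldType) (n : nat) (c p : 'I_n -> R)
  (sfail ssucc : seq 'I_n)
  (hsf : perm_eq sfail (enum 'I_n))
  (hsfs : sorted (fun a b => c a / (1 - p a) <= c b / (1 - p b)) sfail)
  (hss : perm_eq ssucc (enum 'I_n))
  (hsss : sorted (fun a b => c a / p a <= c b / p b) ssucc) done jf js :
  first_untested sfail done = Some jf ->
  first_untested ssucc done = Some js ->
  [/\ jf \notin done, js \notin done,
      forall w, w \notin done -> ratio c p false jf <= ratio c p false w &
      forall w, w \notin done -> ratio c p true js <= ratio c p true w].
Proof.
move=> Ef Es.
have [hf1 hf2] := head_min (f := fun w => c w / (1 - p w)) (le := Order.le)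
   (fun a b d (h1 : a <= b) (h2 : b <= d) => le_trans h1 h2) (@lexx _ _) hsf hsfs Ef.
have [hs1 hs2] := head_min (f := fun w => c w / p w) (le := Order.le)
   (fun a b d (h1 : a <= b) (h2 : b <= d) => le_trans h1 h2) (@lexx _ _) hss hsss Es.
by split.
Qed.

Lemma step_good (R : realFieldType) (n : nat) (c p : 'I_n -> R)
  (sfail ssucc : seq 'I_n)
  (hsf : perm_eq sfail (enum 'I_n))
  (hsfs : sorted (fun a b => c a / (1 - p a) <= c b / (1 - p b)) sfail)
  (hss : perm_eq ssucc (enum 'I_n))
  (hsss : sorted (fun a b => c a / p a <= c b / p b) ssucc)
  (tie : nat -> bool) tau tr e :
  rr_step c sfail ssucc tie tau tr = Some e -> Good c p tr -> Good c p (rcons tr e).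
Proof.
move=> /(rr_step_info hsf hsfs hss hsss) [jf [js [Ef Es He _ _]]] [hu hg].
have [hjf hjs hf hs] := heads hsf hsfs hss hsss Ef Es.
have he1 : e.2 \notin map snd tr by rewrite He; case: e.1.
have he2 : forall w, w \notin map snd tr -> ratio c p e.1 e.2 <= ratio c p e.1 w.
  by rewrite He; case: e.1; [apply: hs | apply: hf].
split.
  by rewrite map_rcons rcons_uniq he1 hu.
move=> e' w; rewrite mem_rcons in_cons map_rcons mem_rcons in_cons negb_or => /orP[/eqP -> | he'] /andP[_ hw].
  exact: he2.
exact: hg.
Qed.

Lemma trace_props (R : realFieldType) (n : nat) (c p : 'I_n -> R) (B : nat) (t : nat -> nat)
  (sfail ssucc : seq 'I_n)
  (hsf : perm_eq sfail (enum 'I_n))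
  (hsfs : sorted (fun a b => c a / (1 - p a) <= c b / (1 - p b)) sfail)
  (hss : perm_eq ssucc (enum 'I_n))
  (hsss : sorted (fun a b => c a / p a <= c b / p b) ssucc)
  (tie : nat -> bool) (x : outcome n) k :
  (forall i, (i <= size (rr_trace c B t sfail ssucc tie x k))%N ->
      Good c p (take i (rr_trace c B t sfail ssucc tie x k))) /\
  (forall i, (i < size (rr_trace c B t sfail ssucc tie x k))%N -> exists e,
      [/\ onth (rr_trace c B t sfail ssucc tie x k) i = Some e,
          rr_step c sfail ssucc tie (size (take i (rr_trace c B t sfail ssucc tie x k))).+1
              (take i (rr_trace c B t sfail ssucc tie x k)) = Some e &
          take i.+1 (rr_trace c B t sfail ssucc tie x k) =
              rcons (take i (rr_trace c B t sfail ssucc tie x k)) e]).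
Proof.
elim: k => [|k [IH1 IH2]] /=.
  split => // i; rewrite leqn0 => /eqP ->; split => //.
set tr := rr_trace c B t sfail ssucc tie x k.
case: ifP => _; first by split.
case Est: (rr_step _ _ _ _ _ _) => [e|]; last by split.
have Gtr : Good c p tr by rewrite -(take_size tr); apply: IH1.
split.
  move=> i; rewrite size_rcons leq_eqVlt ltnS => /orP[/eqP -> | hi].
    rewrite take_oversize ?size_rcons //; exact: step_good Est Gtr.
  by rewrite -cats1 takel_cat //; apply: IH1.
move=> i; rewrite size_rcons ltnS leq_eqVlt => /orP[/eqP -> | hi].
  exists e; rewrite -!cats1 (take_size_cat _ (erefl _)) take_oversize; last by rewrite size_cat /= addn1.
  split => //.
  by rewrite onth_cat ltnn subnn.
have [e' [h1 h2 h3]] := IH2 i hi.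
have ht1 : take i (rcons tr e) = take i tr by rewrite -cats1 takel_cat // ltnW.
have ht2 : take i.+1 (rcons tr e) = take i.+1 tr by rewrite -cats1 takel_cat.
exists e'; rewrite ht1 ht2; split => //.
by rewrite -cats1 onth_cat hi.
Qed.

Definition Aof (n : nat) (hh : bool) (tr : seq (bool * 'I_n)) : {set 'I_n} :=
  [set j in [seq e.2 | e <- tr & e.1 == hh]].

Lemma CaccE (R : realFieldType) (n : nat) (c : 'I_n -> R) hh tr :
  uniq (map snd tr) -> Cacc c hh tr = \sum_(j in Aof hh tr) c j.
Proof.
move=> hu.
have hu' : uniq [seq e.2 | e <- tr & e.1 == hh].
  apply: subseq_uniq hu; apply: map_subseq; exact: filter_subseq.
rewrite /Cacc -big_filter -(big_map snd predT) (big_uniq _ hu').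
by apply: eq_bigl => j; rewrite inE.
Qed.

Lemma AofP (n : nat) hh (tr : seq (bool * 'I_n)) j :
  j \in Aof hh tr -> exists2 e, e \in tr & e.1 = hh /\ e.2 = j.
Proof.
rewrite inE => /mapP [e]; rewrite mem_filter => /andP[/eqP h1 h2] ->.
by exists e.
Qed.

Lemma state_bound (R : realFieldType) (n : nat) (c p : 'I_n -> R)
  (hc : forall j, 0 <= c j) (hp : forall j, 0 < p j < 1)
  (sfail ssucc : seq 'I_n)
  (hsf : perm_eq sfail (enum 'I_n))
  (hsfs : sorted (fun a b => c a / (1 - p a) <= c b / (1 - p b)) sfail)
  (hss : perm_eq ssucc (enum 'I_n))
  (hsss : sorted (fun a b => c a / p a <= c b / p b) ssucc)
  (tie : nat -> bool) tau tr e (T : {set 'I_n}) :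
  rr_step c sfail ssucc tie tau tr = Some e -> Good c p tr -> (size tr < #|T|)%N ->
  Cacc c e.1 tr + c e.2 <= 2 * \sum_(j in T) c j.
Proof.
move=> /(rr_step_info hsf hsfs hss hsss) [jf [js [Ef Es He hle1 hle2]]] [hu hg] hsz.
have [hjf hjs hf hs] := heads hsf hsfs hss hsss Ef Es.
pose D := [set j in map snd tr].
have hD : #|D| = size tr by rewrite cardsE (card_uniqP hu) size_map.
have hDin : forall w, (w \notin D) = (w \notin map snd tr) by move=> w; rewrite inE.
have hAD : forall hh, Aof hh tr \subset D.
  move=> hh; apply/subsetP => j /AofP [e' he' [_ <-]]; rewrite inE; exact: map_f.
have hp0 : forall w, 0 < p w by move=> w; case/andP: (hp w).
have hp1 : forall w, 0 < 1 - p w by move=> w; case/andP: (hp w) => _; rewrite subr_gt0.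
have hcard : (#|D| < #|T|)%N by rewrite hD.
case: (leP (ratio c p true js) (ratio c p false jf)) => hcmp.
- apply: le_trans hle2 _; rewrite (CaccE _ _ hu).
  apply: (@core R n c p (fun w => 1 - p w) hc hp0 hp1 _ (Aof true tr) D T js jf) => //.
  + by move=> w; rewrite addrC subrK.
  + by move=> w; rewrite hDin; apply: hs.
  + by move=> w; rewrite hDin; apply: hf.
  + move=> j /AofP [e' he' [h1 h2]]; have := hg e' js he' hjs.
    by rewrite /ratio h1 h2.
- apply: le_trans hle1 _; rewrite (CaccE _ _ hu).
  apply: (@core R n c (fun w => 1 - p w) p hc hp1 hp0 _ (Aof false tr) D T jf js) => //.
  + by move=> w; rewrite subrK.
  + by move=> w; rewrite hDin; apply: hf.
  + by move=> w; rewrite hDin; apply: hs.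
  + exact: ltW.
  + move=> j /AofP [e' he' [h1 h2]]; have := hg e' jf he' hjf.
    by rewrite /ratio h1 h2.
Qed.

Lemma score_ge (n B : nat) (t : nat -> nat) (y : outcome n) i :
  (1 <= i <= B)%N -> (t i <= weight y)%N -> (i <= score B t y)%N.
Proof.
move=> hi hti; rewrite /score.
by apply: (leq_bigmax_seq (F := fun i => i)); rewrite ?mem_index_iota ?ltnS.
Qed.

Lemma score_spec (n B : nat) (t : nat -> nat) (y : outcome n) :
  (1 <= B)%N -> t 1%N = 0%N -> (t (score B t y) <= weight y)%N.
Proof.
move=> hB ht1.
have : (score B t y == 0%N) || (t (score B t y) <= weight y)%N.
  rewrite /score; apply: (big_ind (fun m => (m == 0%N) || (t m <= weight y)%N)) => //.
    move=> a b /= ha hb.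
    have [->|->] : maxn a b = a \/ maxn a b = b.
      move: (a : nat) (b : nat) => a' b'; lia.
    by []. by [].
  by move=> i ->; rewrite orbT.
have : (1 <= score B t y)%N by apply: score_ge; rewrite ?hB ?ht1.
by case: (score B t y) => //.
Qed.

Lemma count_as_sum (n : nat) (T : seq 'I_n) (P : pred 'I_n) :
  uniq T -> count P T = (\sum_(j < n) ((j \in T) && P j : nat))%N.
Proof.
move=> hu; rewrite -sum1_count big_mkcond (big_uniq _ hu) /= big_mkcond /=.
by apply: eq_bigr => j _; case: (j \in T); case: (P j).
Qed.

Lemma det_counts (n B : nat) (t : nat -> nat) (hB : (1 <= B)%N) (ht1 : t 1%N = 0%N)
  (htB : t B.+1 = n.+1) (x : outcome n) (T : seq 'I_n) :
  uniq T -> determined B t x T ->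
  (t (score B t x) <= count (fun j => x j) T)%N /\
  (n.+1 - t (score B t x).+1 <= count (fun j => ~~ x j) T)%N.
Proof.
move=> hu /forallP hdet.
pose x1 : outcome n := [ffun j => (j \in T) && x j].
pose x2 : outcome n := [ffun j => (j \in T) ==> x j].
have s1 : score B t x1 = score B t x.
  apply/eqP; move/implyP: (hdet x1); apply; apply/forallP => j; apply/implyP => jT.
  by rewrite /x1 ffunE jT.
have s2 : score B t x2 = score B t x.
  apply/eqP; move/implyP: (hdet x2); apply; apply/forallP => j; apply/implyP => jT.
  by rewrite /x2 ffunE jT.
have w1 : weight x1 = count (fun j => x j) T.
  rewrite (count_as_sum _ hu) /weight; apply: eq_bigr => j _; by rewrite /x1 ffunE.
have w2 : (weight x2 + count (fun j => ~~ x j) T)%N = n.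
  rewrite (count_as_sum _ hu) /weight -big_split /=.
  rewrite (eq_bigr (fun _ => 1%N)); last first.
    by move=> j _; rewrite /x2 ffunE; case: (j \in T); case: (x j).
  by rewrite sum_nat_const card_ord muln1.
split.
  by rewrite -w1 -s1; apply: score_spec.
have hsB : (score B t x <= B)%N.
  rewrite /score; apply/bigmax_leqP_seq => i; rewrite mem_index_iota ltnS.
  by case/andP.
case: (ltnP (score B t x) B) => hlt.
  have : ~~ (t (score B t x).+1 <= weight x2)%N.
    apply/negP => hle; have h := @score_ge n B t x2 (score B t x).+1.
    rewrite s2 in h; have := h hlt hle; lia.
  rewrite -ltnNge => hw; lia.
have -> : score B t x = B by apply/eqP; rewrite eqn_leq hsB hlt.
by rewrite htB subnn.
Qed.

Lemma all_in_det (n B : nat) (t : nat -> nat) (x : outcome n) (T : seq 'I_n) :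
  (forall j, j \in T) -> determined B t x T.
Proof.
move=> hall; apply/forallP => x'; apply/implyP => /forallP hx'.
have -> : x' = x by apply/ffunP => j; have := hx' j; rewrite hall => /eqP.
by rewrite eqxx.
Qed.

Lemma shist_inv (n B : nat) (t : nat -> nat) (S : strategy n) (x : outcome n)
  (hv : valid_strategy B t S) k :
  uniq (map fst (shist B t S x k)) /\
  (determined B t x (map fst (shist B t S x k)) \/ size (shist B t S x k) = k).
Proof.
elim: k => [|k [hu hd]] /=; first by split => //; right.
case: ifP => hdet; first by split => //; left.
have hn := hv x k (negbT hdet).
split; first by rewrite map_rcons rcons_uniq hn hu.
right; rewrite size_rcons; case: hd => [h|->] //; by rewrite h in hdet.
Qed.

Lemma shist_final (n B : nat) (t : nat -> nat) (S : strategy n) (x : outcome n)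
  (hv : valid_strategy B t S) :
  uniq (map fst (shist B t S x n)) /\ determined B t x (map fst (shist B t S x n)).
Proof.
have [hu [hd|hs]] := shist_inv x hv n; split => //.
apply: all_in_det => j.
have hc : #|map fst (shist B t S x n)| = #|'I_n| by rewrite (card_uniqP hu) size_map hs card_ord.
have := subset_cardP hc; rewrite subset_predT => /(_ isT) /(_ j); by [].
Qed.

Lemma sum_g (R : realFieldType) (n : nat) (c : 'I_n -> R) (h : bool) m (s : seq (bool * 'I_n)) :
  \sum_(0 <= i < m) (match onth s i with Some e => if e.1 == h then c e.2 else 0 | None => 0 end)
  = Cacc c h (take m s).
Proof.
elim: m s => [|m IH] s; first by rewrite big_geq // take0 /Cacc big_nil.
rewrite big_nat_recl //; case: s => [|e s'].
- rewrite /= big1 ?addr0 /Cacc ?big_nil //.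
- rewrite /= IH /Cacc big_cons; case: (e.1 == h) => //; by rewrite add0r.
Qed.

Lemma Cacc_rcons (R : realFieldType) (n : nat) (c : 'I_n -> R) h tr e :
  Cacc c h (rcons tr e) = Cacc c h tr + (if e.1 == h then c e.2 else 0).
Proof.
by rewrite /Cacc -cats1 big_cat /= big_cons big_nil; case: (e.1 == h); rewrite ?addr0.
Qed.

Theorem lemma5 (R : realFieldType) (n : nat) (c p : 'I_n -> R) (B : nat) (t : nat -> nat)
  (hc : forall j, 0 <= c j) (hp : forall j, 0 < p j < 1)
  (hB : (1 <= B)%N) (ht1 : t 1%N = 0%N) (htB : t B.+1 = n.+1)
  (ht : forall i, (1 <= i <= B)%N -> (t i < t i.+1)%N)
  (sfail ssucc : seq 'I_n)
  (hsf : perm_eq sfail (enum 'I_n))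
  (hsfs : sorted (fun a b => c a / (1 - p a) <= c b / (1 - p b)) sfail)
  (hss : perm_eq ssucc (enum 'I_n))
  (hsss : sorted (fun a b => c a / p a <= c b / p b) ssucc)
  (tie : nat -> bool)
  (OPT : strategy n)
  (hOPTv : valid_strategy B t OPT)
  (hOPT : forall S : strategy n, valid_strategy B t S ->
            Ecost c p B t OPT <= Ecost c p B t S)
  (x : outcome n) (h : bool) :
  \sum_(1 <= tau < (tau1 c B t sfail ssucc tie x).+1)
      rr_cost c B t sfail ssucc tie x h tau
  <= 2 * scost c B t OPT x.
Proof.
set run := rr_run c B t sfail ssucc tie x.
set tau := tau1 c B t sfail ssucc tie x.
have [hu hdet] := shist_final x hOPTv.
set T := map fst (shist B t OPT x n) in hu hdet.
have [hcs hcf] := det_counts hB ht1 htB hu hdet.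
pose TS := [set j in T].
have hTS : #|TS| = (count (fun j => x j) T + count (fun j => ~~ x j) T)%N.
  by rewrite cardsE (card_uniqP hu) -(count_predC (fun j => x j)).
have hscost : scost c B t OPT x = \sum_(j in TS) c j.
  rewrite /scost -(big_map fst predT) -/T (big_uniq _ hu).
  by apply: eq_bigl => j; rewrite inE.
rewrite hscost.
have -> : \sum_(1 <= tau0 < tau.+1) rr_cost c B t sfail ssucc tie x h tau0
          = Cacc c h (take tau run).
  rewrite big_add1 /= -sum_g; apply: eq_bigr => i _.
  by rewrite /rr_cost -/run.
have [TP1 TP2] := @trace_props R n c p B t sfail ssucc hsf hsfs hss hsss tie x n.
rewrite -/(rr_run c B t sfail ssucc tie x) -/run in TP1 TP2.
have claim : forall m, (m <= size run)%N -> (m <= tau)%N ->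
    Cacc c h (take m run) <= 2 * \sum_(j in TS) c j.
  elim => [|m IH] hm htau.
    rewrite take0 /Cacc big_nil; apply: mulr_ge0 => //; exact: sumr_ge0.
  have [e [he1 he2 he3]] := TP2 m hm.
  rewrite he3 Cacc_rcons.
  case: eqP => [he|hne]; last by rewrite addr0; apply: IH; apply: ltnW.
  rewrite -he.
  have hsz : size (take m run) = m by rewrite size_takel // ltnW.
  rewrite hsz in he2.
  apply: (state_bound hc hp hsf hsfs hss hsss he2); first exact: TP1 (ltnW hm).
  have hcond : tau1_cond c B t sfail ssucc tie x m = false.
    have hlt : (m < find (tau1_cond c B t sfail ssucc tie x) (iota 0 (size run).+1))%N by [].
    have := before_find 0%N hlt; rewrite nth_iota //; last by rewrite ltnS ltnW.
  move: hcond; rewrite /tau1_cond -/run => /negbT; rewrite negb_or -!ltnNge => /andP[h1 h2].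
  rewrite hsz hTS.
  have := count_predC (fun j => x j) (map snd (take m run)).
  rewrite size_map hsz => hcnt.
  have e1 : count (predC (fun j => x j)) (map snd (take m run)) = count (fun j => ~~ x j) (map snd (take m run)) by [].
  lia.
case: (leqP tau (size run)) => hts.
  exact: claim.
rewrite take_oversize ?(ltnW hts) //.
rewrite -{1}(take_size run); apply: claim => //; exact: ltnW.
Qed.
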